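(* Let $(M,d)$ be a metric space and let $T:M\to M$ be a surjective mapping such that $$\inf_{n\ge 1}\ \sup_{x\in M} d(T^{n+1}x,T^{n}x)=0.$$ Then $T$ is the identity mapping on $M$.
   Context: $T^n$ denotes the $n$-fold composition of $T$ with itself. *)

(* Defs.v *)
From HB Require Import structures.
From mathcomp Require Import all_boot all_order all_algebra.
From mathcomp Require Import all_classical all_reals all_analysis.

(* Main.v *)
Require Import Defs.
From HB Require Import structures.
From mathcomp Require Import all_boot all_order all_algebra.
From mathcomp Require Import all_classical all_reals all_analysis.
Import Order.TTheory GRing.Theory Num.Theory.
Local Open Scope classical_set_scope.
Local Open Scope ring_scope.

Theorem lemma2p1 (R : realType) (M : metricType R) (T : M -> M) :
  (forall y : M, exists x : M, T x = y) ->
  ereal_inf [set ereal_sup [set (mdist (iter n.+1 T x) (iter n T x))%:E | x in [set: M]]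
            | n in [set n : nat | (1 <= n)%N]] = 0%E ->
  forall x : M, T x = x.
Proof.
move=> hs hinf y.
have iterS_surj : forall n (z : M), exists x, iter n T x = z.
  elim=> [|n IH] z; first by exists z.
  have [w <-] := hs z; have [x <-] := IH w; by exists x.
case: (pselect (T y = y)) => // hne; exfalso.
have hpos : 0 < mdist (T y) y.
  rewrite lt_def; apply/andP; split; last exact: mdist_ge0.
  by apply/eqP => h0; apply: hne; apply: mdist_positivity; rewrite h0.
have : (ereal_inf [set ereal_sup [set (mdist (iter n.+1 T x) (iter n T x))%:E | x in [set: M]]
            | n in [set n : nat | (1 <= n)%N]] < (mdist (T y) y)%:E)%E.
  by rewrite hinf lte_fin.
move=> /ereal_inf_lt [s [n _ <-]] hlt.
have [x hx] := iterS_surj n y.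
have : ((mdist (iter n.+1 T x) (iter n T x))%:E <= ereal_sup [set (mdist (iter n.+1 T x) (iter n T x))%:E | x in [set: M]])%E.
  by apply: ereal_sup_ubound; exists x.
move=> hle; have := le_lt_trans hle hlt.
rewrite iterS hx lte_fin.
by rewrite ltxx.
Qed.
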